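(* Let $E_1,\dots,E_m$ be mutually independent events on a probability space, let $p_i=\mathbf P(E_i)$, and assume $p_1\ge p_2\ge\dots\ge p_m$. Fix real numbers $0<a<b$ and define random variables $X_i=b$ on $E_i$ and $X_i=a$ on $E_i^c$. For a nonempty $\mathcal S\subseteq[m]$ define $$V(\mathcal S)=\mathbf E\Big[\ln\Big(\frac{1}{|\mathcal S|}\sum_{i\in\mathcal S}X_i\Big)\Big].$$ Then, for $1\le k\le m$, the set $[k]=\{1,\dots,k\}$ (the indices with the $k$ largest $p_i$) maximizes $V(\mathcal S)$ over all $\mathcal S\subseteq[m]$ with $|\mathcal S|=k$.
   Context: $V$ is the expected log-return of an equally weighted portfolio $\mathcal S$; a maximizer over $k$-element subsets is called a log-optimal portfolio. *)

(* Defs.v *)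
From HB Require Import structures.
From mathcomp Require Import all_boot all_order all_algebra.
From mathcomp Require Import all_classical all_reals all_analysis.
Set Implicit Arguments. Unset Strict Implicit. Unset Printing Implicit Defensive.
Import Order.TTheory GRing.Theory Num.Theory.
Local Open Scope classical_set_scope.
Local Open Scope ring_scope.

Definition mutually_independent {d} {T : measurableType d} {R : realType}
  (P : probability T R) (m : nat) (E : 'I_m -> set T) : Prop :=
  forall S : {set 'I_m},
    P (\big[setI/setT]_(i in S) E i) = (\prod_(i in S) P (E i))%E.

Definition Xrv {T : Type} {R : realType} (m : nat) (E : 'I_m -> set T)
  (a b : R) (i : 'I_m) : T -> R :=
  fun t => if `[< E i t >] then b else a.

Definition Vlog {d} {T : measurableType d} {R : realType}
  (P : probability T R) (m : nat) (E : 'I_m -> set T) (a b : R)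
  (S : {set 'I_m}) : \bar R :=
  'E_P[fun t => ln ((#|S|%:R)^-1 * \sum_(i in S) Xrv E a b i t)].

(* Main.v *)
Require Import Defs.
From HB Require Import structures.
From mathcomp Require Import all_boot all_order all_algebra.
From mathcomp Require Import all_classical all_reals all_analysis.
Import Order.TTheory GRing.Theory Num.Theory.
Local Open Scope classical_set_scope.
Local Open Scope ring_scope.

From mathcomp Require Import zify ring lra.
Set Implicit Arguments. Unset Strict Implicit. Unset Printing Implicit Defensive.

Section comb.
Variables (R : realFieldType) (m : nat) (p : 'I_m -> R) (f : nat -> R).

Definition wt (S B : {set 'I_m}) := \prod_(i in B) p i * \prod_(i in S :\: B) (1 - p i).
Definition Wt S := \sum_(B in powerset S) f #|B| * wt S B.

Lemma sum_powersetU1 (c : 'I_m) (R0 : {set 'I_m}) (F : {set 'I_m} -> R) :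
  c \notin R0 ->
  \sum_(B in powerset (c |: R0)) F B = \sum_(B in powerset R0) (F B + F (c |: B)).
Proof.
move=> cR; rewrite big_split /= [LHS](bigID (fun B : {set 'I_m} => c \in B)) /= addrC; congr (_ + _).
  apply: eq_bigl => B; rewrite !inE; apply/idP/idP.
    case/andP=> /fintype.subsetP sB cB; apply/fintype.subsetP => x xB.
    have := sB x xB; rewrite !inE; case/orP=> // /eqP xc.
    by rewrite -xc xB in cB.
  move=> /fintype.subsetP sB; apply/andP; split.
    by apply/fintype.subsetP => x xB; rewrite inE sB ?orbT.
  by apply/negP => /sB; rewrite (negbTE cR).
rewrite (reindex_onto (fun B => c |: B) (fun B => B :\ c)); last first.
  by move=> B /andP[_ cB]; rewrite finset.setD1K.
apply: eq_bigl => B; rewrite !inE eqxx andbT.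
apply/idP/idP.
  case/andP=> /fintype.subsetP sB /eqP e; apply/fintype.subsetP => x xB.
  have := sB x; rewrite !inE xB orbT => /(_ isT) /orP[/eqP xc|//].
  by move: xB; rewrite xc -e !inE eqxx.
move=> /fintype.subsetP sB; apply/andP; split.
  by apply/fintype.subsetP => x; rewrite !inE => /orP[->//|/sB ->]; rewrite orbT.
have cB : c \notin B by apply/negP => /sB; rewrite (negbTE cR).
by rewrite finset.setU1K.
Qed.

Lemma Wt_U1 (c : 'I_m) (R0 : {set 'I_m}) : c \notin R0 ->
  Wt (c |: R0) = \sum_(B in powerset R0)
     wt R0 B * (f #|B| + p c * (f #|B|.+1 - f #|B|)).
Proof.
move=> cR; rewrite /Wt sum_powersetU1 //; apply: eq_bigr => B.
rewrite inE => /fintype.subsetP sB.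
have cB : c \notin B by apply/negP => /sB; rewrite (negbTE cR).
rewrite finset.cardsU1 cB add1n.
have -> : wt (c |: R0) B = (1 - p c) * wt R0 B.
  rewrite /wt.
  have -> : (c |: R0) :\: B = c |: (R0 :\: B).
    apply/finset.setP => x; rewrite !inE; case: (eqVneq x c) => [->|] //=.
    by rewrite (negbTE cB).
  rewrite finset.big_setU1 /=; last by rewrite !inE (negbTE cR) andbF.
  by rewrite mulrCA.
have -> : wt (c |: R0) (c |: B) = p c * wt R0 B.
  rewrite /wt finset.big_setU1 //=.
  have -> : (c |: R0) :\: (c |: B) = R0 :\: B.
    apply/finset.setP => x; rewrite !inE; case: (eqVneq x c) => [->|] //=.
    by rewrite (negbTE cR) andbF.
  by rewrite mulrA.
by ring.
Qed.

Hypothesis p01 : forall i, 0 <= p i <= 1.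
Hypothesis fmono : forall n, f n <= f n.+1.
Hypothesis pdec : forall i j : 'I_m, (i <= j)%N -> p j <= p i.

Lemma wt_ge0 (S B : {set 'I_m}) : 0 <= wt S B.
Proof.
apply: mulr_ge0; apply: prodr_ge0 => i _; have /andP[h1 h2] := p01 i.
  by [].
by rewrite subr_ge0.
Qed.

Lemma Wt_swap (i j : 'I_m) (R0 : {set 'I_m}) :
  i \notin R0 -> j \notin R0 -> p j <= p i -> Wt (j |: R0) <= Wt (i |: R0).
Proof.
move=> iR jR pji; rewrite !Wt_U1 //; apply: ler_sum => B; rewrite inE => sB.
apply: ler_wpM2l; first exact: wt_ge0.
rewrite lerD2l; apply: ler_wpM2r => //.
by rewrite subr_ge0.
Qed.

Lemma Wt_max (k : nat) (hkm : (k <= m)%N) (S : {set 'I_m}) :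
  #|S| = k -> Wt S <= Wt [set i : 'I_m | (i < k)%N]%SET.
Proof.
set K := [set i : 'I_m | (i < k)%N]%SET.
have cK : #|K| = k.
  have -> : K = [set widen_ord hkm x | x : 'I_k]%SET.
    apply/finset.setP => x; rewrite /K inE; apply/idP/imsetP.
      by move=> xk; exists (Ordinal xk) => //; apply: val_inj.
    by case=> y _ ->; rewrite /= ltn_ord.
  by rewrite card_imset ?card_ord //; by move=> x y /(congr1 val) /= e; apply: val_inj.
move: {2}#|S :\: K| (erefl #|S :\: K|) => n.
elim: n S => [|n IH] S hn hS.
  have sSK : S \subset K by rewrite -finset.setD_eq0 -finset.cards_eq0 hn.
  have eSK : S = K.
    apply/eqP. rewrite eqEcard sSK hS cK. by rewrite leqnn. 
  rewrite eSK.
  by [].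
have [j jS] : exists j, j \in S :\: K.
  by apply/finset.set0Pn; rewrite -card_gt0 hn.
have [i iK] : exists i, i \in K :\: S.
  apply/finset.set0Pn; rewrite -card_gt0.
  have h1 := finset.cardsD S K; have h2 := finset.cardsD K S; rewrite finset.setIC in h2; have h3 := finset.subsetIl S K; have h4 := subset_leq_card h3; rewrite h2 cK; rewrite h1 hS in hn; rewrite hn; by [].
have jK' : j \notin K by move: jS; rewrite inE => /andP[].
have jS' : j \in S by move: jS; rewrite inE => /andP[].
have iK' : i \in K by move: iK; rewrite inE => /andP[].
have iS' : i \notin S by move: iK; rewrite inE => /andP[].
have jR : j \notin S :\ j by rewrite !inE eqxx.
have iR : i \notin S :\ j by rewrite !inE (negbTE iS') andbF.
have -> : S = j |: (S :\ j) by rewrite finset.setD1K.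
apply: le_trans (Wt_swap iR jR _) _.
  by apply: pdec; move: iK' jK'; rewrite /K !inE; lia.
apply: IH.
  have e : (i |: (S :\ j)) :\: K = (S :\: K) :\ j.
    apply/finset.setP => x; rewrite !inE; case: (eqVneq x i) => [->|] /=.
      by move: iK'; rewrite /K inE => ->; rewrite andbF.
    by move=> _; rewrite andbCA.
  by move: hn; rewrite e (finset.cardsD1 j (S :\: K)) jS add1n => -[].
by rewrite finset.cardsU1 iR /= add1n -hS (finset.cardsD1 j S) jS'.
Qed.
End comb.

Lemma in_bigsetI {T : Type} {I : eqType} (r : seq I) (Q : pred I) (F : I -> set T) (t : T) :
  (\big[setI/setT]_(i <- r | Q i) F i) t <-> (forall i, i \in r -> Q i -> F i t).
Proof.
elim: r => [|x r IH]; first by rewrite big_nil; split.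
rewrite big_cons; split.
  case: ifPn => Qx.
    case=> Fx /IH H i; rewrite inE => /orP[/eqP ->//|]; exact: H.
  move=> /IH H i; rewrite inE => /orP[/eqP ->|]; first by rewrite (negbTE Qx).
  exact: H.
move=> H; case: ifPn => Qx.
  split; first by apply: H; rewrite ?inE ?eqxx.
  by apply/IH => i ir; apply: H; rewrite inE ir orbT.
by apply/IH => i ir; apply: H; rewrite inE ir orbT.
Qed.

Lemma in_bigsetI_fin {T : Type} {I : finType} (A : {set I}) (F : I -> set T) (t : T) :
  (\big[setI/setT]_(i in A) F i) t <-> (forall i, i \in A -> F i t).
Proof.
rewrite in_bigsetI; split => H i.
  by move=> iA; apply: H => //; rewrite mem_index_enum.
by move=> _; apply: H.
Qed.

Section prob.
Variables (R : realType) (d : measure_display) (T : measurableType d)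
  (P : probability T R) (m : nat) (E : 'I_m -> set T)
  (mE : forall i, measurable (E i))
  (indep : mutually_independent P E).

Let p i := fine (P (E i)).

Lemma Pfin A : measurable A -> P A = (fine (P A))%:E.
Proof. by move=> mA; rewrite fineK // fin_num_measure. Qed.

Lemma indep_compl n : forall (A C : {set 'I_m}), #|C| = n ->
  (forall i, i \in A -> i \notin C) ->
  P (\big[setI/setT]_(i in A) E i `&` \big[setI/setT]_(i in C) ~` E i) =
  (\prod_(i in A) p i * \prod_(i in C) (1 - p i))%:E.
Proof.
elim: n => [|n IH] A C hC dAC.
  move/eqP: hC; rewrite cards_eq0 => /eqP ->.
  rewrite !big_set0 setIT mulr1 indep -prodEFin.
  by apply: eq_bigr => i _; rewrite /p -Pfin.
have [c cC] : exists c, c \in C by apply/set0Pn; rewrite -card_gt0 hC.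
have cA : c \notin A by apply/negP => /dAC; rewrite cC.
set C' := C :\ c.
have cC' : c \notin C' by rewrite !inE eqxx.
have eC : C = c |: C' by rewrite finset.setD1K.
have hC' : #|C'| = n by move: hC; rewrite (cardsD1 c C) cC add1n => -[].
have dAC' : forall i, i \in A -> i \notin C'.
  by move=> i /dAC iC; rewrite !inE (negbTE iC) andbF.
have dcAC' : forall i, i \in c |: A -> i \notin C'.
  by move=> i /setU1P [->//|]; exact: dAC'.
set X := \big[setI/setT]_(i in A) E i `&` \big[setI/setT]_(i in C') ~` E i.
have mX : measurable X.
  apply: measurableI; apply: bigsetI_measurable => i _ //.
  exact: measurableC.
have -> : \big[setI/setT]_(i in A) E i `&` \big[setI/setT]_(i in C) ~` E i
    = X `\` E c.
  by rewrite eC big_setU1 //= /X setDE setIA setIAC.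
rewrite measureD //; last by apply: le_lt_trans (probability_le1 P mX) _; rewrite ltry.
have -> : X `&` E c = \big[setI/setT]_(i in c |: A) E i `&` \big[setI/setT]_(i in C') ~` E i.
  by rewrite big_setU1 //= /X setIAC [E c `&` _]setIC.
have e1 := IH A C' hC' dAC'; have e2 := IH (c |: A) C' hC' dcAC'.
rewrite -/X in e1.
transitivity ((\prod_(i in A) p i * \prod_(i in C') (1 - p i))%:E -
  (\prod_(i in c |: A) p i * \prod_(i in C') (1 - p i))%:E)%E.
  by rewrite -e1 -e2.
rewrite eC big_setU1 //= big_setU1 //=.
by rewrite -EFinB; congr (_%:E); ring.
Qed.

Definition atom (S B : {set 'I_m}) :=
  \big[setI/setT]_(i in B) E i `&` \big[setI/setT]_(i in S :\: B) ~` E i.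

Lemma matom S B : measurable (atom S B).
Proof.
apply: measurableI; apply: bigsetI_measurable => i _ //; exact: measurableC.
Qed.

Lemma Patom S B : P (atom S B) = (wt p S B)%:E.
Proof.
rewrite /atom (@indep_compl #|S :\: B|) //.
by move=> i iB; rewrite !inE iB.
Qed.

Lemma atom_indic (S B : {set 'I_m}) t : B \subset S ->
  \1_(atom S B) t = (B == [set i in S | `[< E i t >]])%:R :> R.
Proof.
move=> /fintype.subsetP sB; rewrite indicE; congr (_%:R); congr (nat_of_bool _).
case: (eqVneq B [set i in S | `[< E i t >]]) => [eB|nB].
  apply: mem_set; split.
    by apply/in_bigsetI_fin => i; rewrite eB inE => /andP[_ /asboolP].
  apply/in_bigsetI_fin => i; rewrite eB !inE => /andP[+ iS]; rewrite iS /=.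
  by move=> /negP h Ei; apply: h; apply/asboolP.
apply/negP; rewrite in_setE; case=> /in_bigsetI_fin h1 /in_bigsetI_fin h2.
apply/negP: nB; rewrite negbK; apply/eqP/setP => i; rewrite inE.
case iB: (i \in B).
  by rewrite sB //=; apply/esym/asboolP; exact: h1.
case iS: (i \in S) => //=; apply/esym/asboolP; apply: h2.
by rewrite !inE iB iS.
Qed.

Variables (a b : R).

Lemma sumX (S : {set 'I_m}) t : \sum_(i in S) Xrv E a b i t =
  #|S|%:R * a + #|[set i in S | `[< E i t >]]|%:R * (b - a).
Proof.
transitivity (\sum_(i in S) (a + (`[< E i t >])%:R * (b - a))).
  by apply: eq_bigr => i _; rewrite /Xrv; case: `[< E i t >]; rewrite /= ?mul1r ?mul0r; ring.
have e : \sum_(i in S) (`[< E i t >])%:R = #|[set i in S | `[< E i t >]]|%:R :> R.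
  rewrite (bigID (fun i => `[< E i t >])) /= [X in _ + X]big1 ?addr0; last first.
    by move=> i /andP[_ h]; rewrite (negbTE h).
  rewrite (eq_bigr (fun=> 1)); last by move=> i /andP[_ ->].
  rewrite (eq_bigl (fun i => i \in [set i in S | `[< E i t >]])); last first.
    by move=> i; rewrite inE.
  by rewrite sumr_const.
by rewrite big_split /= sumr_const -mulr_suml e [#|S|%:R * a]mulr_natl.
Qed.

Variable (k : nat).
Definition fk (n : nat) : R := ln ((k%:R)^-1 * (k%:R * a + n%:R * (b - a))).

Lemma Vlog_Wt (S : {set 'I_m}) : #|S| = k -> Vlog P E a b S = (Wt p fk S)%:E.
Proof.
move=> hS; rewrite /Vlog unlock.
transitivity (\int[P]_t (\sum_(B in powerset S) (fk #|B|)%:E * (\1_(atom S B) t)%:E))%E.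
  apply: eq_integral => t _; rewrite sumX hS.
  have sB0 : [set i in S | `[< E i t >]] \in powerset S.
    by rewrite inE; apply/fintype.subsetP => i; rewrite inE => /andP[].
  rewrite (bigD1 _ sB0) /= atom_indic ?eqxx; last by rewrite inE in sB0.
  rewrite mule1 big1 ?adde0 // => B /andP[BS nB].
  rewrite atom_indic; first by rewrite (negbTE nB) mule0.
  by move: BS => h; rewrite -powersetE; exact: h.
rewrite (@integral_sum _ _ _ P _ measurableT _
   (fun (B : {set 'I_m}) t => (fk #|B|)%:E * (\1_(atom S B) t)%:E)%E); last first.
  move=> B; apply: integrableZl => //. apply: (@integrable_indic _ _ R P). exact: matom.
rewrite /Wt -sumEFin; apply: eq_bigr => B _.
rewrite integralZl //; last by apply: (@integrable_indic _ _ R P); exact: matom.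
rewrite integral_indic //; last exact: matom.
rewrite setIT.
by rewrite EFinM -(Patom S B).
Qed.

End prob.

Lemma card_ltk (m k : nat) (hkm : (k <= m)%N) : #|[set i : 'I_m | (i < k)%N]%SET| = k.
Proof.
have -> : [set i : 'I_m | (i < k)%N]%SET = [set widen_ord hkm x | x : 'I_k]%SET.
  apply/setP => x; rewrite inE; apply/idP/imsetP.
    by move=> xk; exists (Ordinal xk) => //; apply: val_inj.
  by case=> y _ ->; rewrite /= ltn_ord.
by rewrite card_imset ?card_ord //; move=> x y /(congr1 val) /= e; apply: val_inj.
Qed.

Theorem theorem4 (R : realType) (d : measure_display) (T : measurableType d)
  (P : probability T R) (m : nat) (E : 'I_m -> set T)
  (mE : forall i, measurable (E i))
  (indep : mutually_independent P E)
  (pdec : forall i j : 'I_m, (i <= j)%N -> (P (E j) <= P (E i))%E)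
  (a b : R) (ha : 0 < a) (hab : a < b)
  (k : nat) (hk1 : (1 <= k)%N) (hkm : (k <= m)%N) :
  forall S : {set 'I_m}, #|S| = k ->
    (Vlog P E a b S <= Vlog P E a b [set i : 'I_m | (i < k)%N])%E.
Proof.
move=> S hS.
rewrite (Vlog_Wt mE indep a b hS) (Vlog_Wt mE indep a b (card_ltk hkm)) lee_fin.
apply: Wt_max => //.
- move=> i; apply/andP; split.
    by apply: fine_ge0; exact: measure_ge0.
  by have := @probability_le1 _ _ _ P _ (mE i); rewrite (Pfin P (mE i)) lee_fin.
- move=> n; rewrite /fk ler_ln ?posrE.
  + apply: ler_wpM2l; first by rewrite invr_ge0 ler0n.
    rewrite lerD2l; apply: ler_wpM2r; first by rewrite subr_ge0 ltW.
    by rewrite -addn1 natrD lerDl.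
  + have h1 : 0 < k%:R * a :> R by rewrite mulr_gt0 // ltr0n.
    have h2 : 0 <= n%:R * (b - a) :> R by rewrite mulr_ge0 // subr_ge0 ltW.
    by rewrite mulr_gt0 // ?invr_gt0 ?ltr0n //; lra.
  + have h1 : 0 < k%:R * a :> R by rewrite mulr_gt0 // ltr0n.
    have h2 : 0 <= n.+1%:R * (b - a) :> R by rewrite mulr_ge0 // subr_ge0 ltW.
    by rewrite mulr_gt0 // ?invr_gt0 ?ltr0n //; lra.
- move=> i j ij; have := pdec i j ij.
  by rewrite (Pfin P (mE i)) (Pfin P (mE j)) lee_fin.
Qed.
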